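(* Let the alphabet be countable, $\{\varphi_1,\dots,\varphi_n\}$ a finite set of sentences, and $\mu_0:\{\varphi_1,\dots,\varphi_n\}\to[0,1]$ a function. For each $S\subseteq\{1,\dots,n\}$ let $\psi_S:=(\bigwedge_{i\in S}\varphi_i)\wedge(\bigwedge_{j\in\{1,\dots,n\}\setminus S}\neg\varphi_j)$. Then: (a) $\mu_0$ can be extended to a probability on sentences $\mu$ (i.e. $\mu(\varphi_i)=\mu_0(\varphi_i)$ for all $i$) if and only if the following system in the $2^n$ variables $a_S$, $S\subseteq\{1,\dots,n\}$, has a solution: $\sum_{S}a_S=1$; $\sum_{S: i\in S}a_S=\mu_0(\varphi_i)$ for $i=1,\dots,n$; $a_S\ge0$ for all $S$; $a_S=0$ whenever $\psi_S$ has no model. (b) $\mu_0$ can be extended to a Gaifman probability on sentences if and only if the same system, with the last condition replaced by ''$a_S=0$ whenever $\psi_S$ has no separating model'', has a solution.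
   Context: Setting: higher-order logic (Church's simple theory of types, without a description operator), with Henkin semantics. Types are generated from $o$ and $\imath$ by $\alpha\to\beta$; an alphabet has variables of each type, equality constants $=_{\alpha\to\alpha\to o}$ and non-logical constants; it is countable if its set of constants is countable. Sentences are closed terms of type $o$; $\mathcal S$ is the set of sentences. An interpretation consists of domains $D_\alpha$ ($D_o=\{\mathsf T,\mathsf F\}$, $D_{\alpha\to\beta}$ a set of functions) and a valuation of constants such that every term has a denotation $V(t,I)$. A sentence is valid if true in every interpretation; a model of a sentence is an interpretation in which it is true. $I$ is separating if for all closed terms $r,s$ of the same function type $\alpha\to\beta$ with $V(r,I)\neq V(s,I)$ there is a closed term $t$ of type $\alpha$ (over the alphabet) with $V((r\,t),I)\neq V((s\,t),I)$; a separating model is a separating interpretation that is a model. A probability on sentences is a non-negative $\mu:\mathcal S\to\mathbb R$ with $\mu(\varphi)=1$ for valid $\varphi$ and $\mu(\varphi\vee\psi)=\mu(\varphi)+\mu(\psi)$ whenever $\neg(\varphi\wedge\psi)$ is valid. $\mu$ is Gaifman if for all closed terms $r,s$ of the same function type $\alpha\to\beta$, $\mu(r=s)=\inf_{\{t_1,\dots,t_n\}}\mu(\bigwedge_{i=1}^n((r\,t_i)=(s\,t_i)))$ over all finite sets of closed terms of type $\alpha$. *)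

(* Defs.v *)
From HB Require Import structures.
From mathcomp Require Import all_boot all_order all_algebra.
From Stdlib Require Import Reals.
From mathcomp Require Import Rstruct.
Set Implicit Arguments.
Unset Strict Implicit.
Unset Printing Implicit Defensive.
Import Order.TTheory GRing.Theory Num.Theory.
Local Open Scope ring_scope.

Inductive ty : Type := To | Ti | Arr of ty & ty.

(* Besides the equality constants
   TEq a : a -> a -> o and the non-logical constants TCst c, the logical
   connectives ~, /\, \/ are primitive constants with fixed meaning. *)
Inductive var : list ty -> ty -> Type :=
| VZ (G : list ty) (a : ty) : var (a :: G) a
| VS (G : list ty) (a b : ty) : var G a -> var (b :: G) a.

Section Logic.
Variables (C : Type) (ctype : C -> ty).

Inductive tm : list ty -> ty -> Type :=
| TVar (G : list ty) (a : ty) : var G a -> tm G a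
| TCst (G : list ty) (c : C) : tm G (ctype c)
| TEq  (G : list ty) (a : ty) : tm G (Arr a (Arr a To))
| TNeg (G : list ty) : tm G (Arr To To)
| TAnd (G : list ty) : tm G (Arr To (Arr To To))
| TOr  (G : list ty) : tm G (Arr To (Arr To To))
| TApp (G : list ty) (a b : ty) : tm G (Arr a b) -> tm G a -> tm G b
| TLam (G : list ty) (a b : ty) : tm (a :: G) b -> tm G (Arr a b).

Definition sentence := tm nil To.

Definition tneg (p : sentence) : sentence := TApp (TNeg nil) p.
Definition tand (p q : sentence) : sentence := TApp (TApp (TAnd nil) p) q.
Definition tor (p q : sentence) : sentence := TApp (TApp (TOr nil) p) q.
Definition teq (a : ty) (r s : tm nil a) : sentence := TApp (TApp (TEq nil a) r) s.

(* a fixed valid sentence, (\x:o. x) = (\x:o. x), used as empty conjunction *)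
Definition tid : tm nil (Arr To To) := TLam (TVar (VZ nil To)).
Definition ttop : sentence := teq tid tid.

Fixpoint bigAnd (l : seq sentence) : sentence :=
  match l with
  | [::] => ttop
  | [:: p] => p
  | p :: l' => tand p (bigAnd l')
  end.

(* D_a (dom a) with D_{a->b} a set of functions, represented extensionally
   via app; D_o is {T,F} (in bijection with bool via tv). *)
Record interp := Interp {
  dom : ty -> Type;
  app : forall a b : ty, dom (Arr a b) -> dom a -> dom b;
  app_ext : forall (a b : ty) (f g : dom (Arr a b)),
      (forall x, app f x = app g x) -> f = g;
  tv : dom To -> bool;
  tv_bij : bijective tv;
  dom_i : inhabited (dom Ti);
  cval : forall c : C, dom (ctype c)
}.

Section Den.
Variable I : interp.

Fixpoint env (G : list ty) : Type :=
  match G with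
  | nil => unit
  | a :: G' => (dom I a * env G')%type
  end.

Fixpoint lookup (G : list ty) (a : ty) (v : var G a) : env G -> dom I a :=
  match v in var G a return env G -> dom I a with
  | VZ G a => fun r => r.1
  | VS G a b v' => fun r => lookup v' r.2
  end.

(* denotation relation: den t r v  means  V(t, I, r) = v *)
Inductive den : forall (G : list ty) (a : ty), tm G a -> env G -> dom I a -> Prop :=
| DVar G a (v : var G a) r : den (TVar v) r (lookup v r)
| DCst G c r : den (TCst G c) r (cval I c)
| DEq G a r (e : dom I (Arr a (Arr a To))) :
    (forall x y, @tv I (app (app e x) y) = true <-> x = y) -> den (TEq G a) r e
| DNeg G r (e : dom I (Arr To To)) :
    (forall x, @tv I (app e x) = ~~ @tv I x) -> den (TNeg G) r e
| DAnd G r (e : dom I (Arr To (Arr To To))) :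
    (forall x y, @tv I (app (app e x) y) = @tv I x && @tv I y) -> den (TAnd G) r e
| DOr G r (e : dom I (Arr To (Arr To To))) :
    (forall x y, @tv I (app (app e x) y) = @tv I x || @tv I y) -> den (TOr G) r e
| DApp G a b (f : tm G (Arr a b)) (t : tm G a) r vf vt :
    den f r vf -> den t r vt -> den (TApp f t) r (app vf vt)
| DLam G a b (t : tm (a :: G) b) r (e : dom I (Arr a b)) :
    (forall x, den t (x, r) (app e x)) -> den (TLam t) r e.

Definition is_interp : Prop :=
  forall (G : list ty) (a : ty) (t : tm G a) (r : env G), exists v, den t r v.

Definition holds (p : sentence) : Prop :=
  exists v, den p (tt : env nil) v /\ @tv I v = true.

Definition separating : Prop :=
  forall (a b : ty) (r s : tm nil (Arr a b)) (vr vs : dom I (Arr a b)),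
    den r (tt : env nil) vr -> den s (tt : env nil) vs -> vr <> vs ->
    exists (t : tm nil a) (wr ws : dom I b),
      den (TApp r t) (tt : env nil) wr /\ den (TApp s t) (tt : env nil) ws /\ wr <> ws.
End Den.

Definition valid (p : sentence) : Prop :=
  forall I : interp, is_interp I -> holds I p.

Definition has_model (p : sentence) : Prop :=
  exists I : interp, is_interp I /\ holds I p.

Definition has_separating_model (p : sentence) : Prop :=
  exists I : interp, is_interp I /\ separating I /\ holds I p.

Definition probability (mu : sentence -> R) : Prop :=
  (forall p, (0 <= mu p)%R) /\
  (forall p, valid p -> mu p = 1%R) /\
  (forall p q, valid (tneg (tand p q)) -> mu (tor p q) = (mu p + mu q)%R).

(* Gaifman condition: mu(r = s) is the infimum, over finite nonempty sets
   {t_1,...,t_k} of closed terms, of mu(/\_i (r t_i = s t_i)). *)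
Definition gaif_conj (a b : ty) (r s : tm nil (Arr a b)) (ts : seq (tm nil a)) : sentence :=
  bigAnd [seq teq (TApp r t) (TApp s t) | t <- ts].

Definition gaifman (mu : sentence -> R) : Prop :=
  forall (a b : ty) (r s : tm nil (Arr a b)),
    (forall (t : tm nil a) (ts : seq (tm nil a)),
        (mu (teq r s) <= mu (gaif_conj r s (t :: ts)))%R) /\
    (forall eps : R, (0 < eps)%R ->
        exists (t : tm nil a) (ts : seq (tm nil a)),
          (mu (gaif_conj r s (t :: ts)) < mu (teq r s) + eps)%R).

Definition psi (n : nat) (phi : 'I_n -> sentence) (S : {set 'I_n}) : sentence :=
  tand (bigAnd [seq phi i | i <- enum S])
       (bigAnd [seq tneg (phi j) | j <- enum (~: S)]).

Definition lin_system (sat : sentence -> Prop) (n : nat)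
    (phi : 'I_n -> sentence) (mu0 : sentence -> R) : Prop :=
  exists a : {set 'I_n} -> R,
    (\sum_(S : {set 'I_n}) a S = 1)%R /\
    (forall i : 'I_n, (\sum_(S : {set 'I_n} | i \in S) a S)%R = mu0 (phi i)) /\
    (forall S, (0 <= a S)%R) /\
    (forall S, ~ sat (psi phi S) -> a S = 0%R).

End Logic.

(* Main.v *)
Require Import Defs.
From HB Require Import structures.
From mathcomp Require Import all_boot all_order all_algebra.
From Stdlib Require Import Reals.
From mathcomp Require Import Rstruct.
From Stdlib Require Import Program.Equality.
From Stdlib Require Import Lra.
From Stdlib Require Import FunctionalExtensionality.
Import Order.TTheory GRing.Theory Num.Theory.
Set Implicit Arguments.
Unset Strict Implicit.
Unset Printing Implicit Defensive.


Section Syntax.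
Variables (C : Type) (ctype : C -> ty).
Local Notation tm := (tm ctype).

Definition rn (G D : seq ty) := forall a, var G a -> var D a.
Definition sb (G D : seq ty) := forall a, var G a -> tm D a.

Definition up_ren G D b (xi : rn G D) : rn (b :: G) (b :: D) :=
  fun c v => match v in var G' c' return
     (match G' with nil => unit | a' :: G'' => rn G'' D -> var (a' :: D) c' end) with
   | VZ G0 a0 => fun _ => VZ D a0
   | VS G0 a0 b0 w => fun xi => VS b0 (xi a0 w)
   end xi.

Fixpoint ren G a (t : tm G a) : forall D, rn G D -> tm D a :=
  match t in Defs.tm _ G a return forall D, rn G D -> tm D a with
  | TVar G a v => fun D xi => TVar ctype (xi a v)
  | TCst G c => fun D xi => TCst ctype D c
  | TEq G a => fun D xi => TEq ctype D a
  | TNeg G => fun D xi => TNeg ctype D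
  | TAnd G => fun D xi => TAnd ctype D
  | TOr G => fun D xi => TOr ctype D
  | TApp G a b f u => fun D xi => TApp (ren f xi) (ren u xi)
  | TLam G a b t => fun D xi => TLam (ren t (up_ren xi))
  end.

Definition shift G b : rn G (b :: G) := fun c w => VS b w.

Definition scons G D a (u : tm D a) (s : sb G D) : sb (a :: G) D :=
  fun c v => match v in var G' c' return
     (match G' with nil => unit | a' :: G'' => tm D a' -> sb G'' D -> tm D c' end) with
   | VZ G0 a0 => fun u _ => u
   | VS G0 a0 b0 w => fun _ s => s a0 w
   end u s.

Definition up_sb G D b (s : sb G D) : sb (b :: G) (b :: D) :=
  scons (TVar ctype (VZ D b)) (fun c w => ren (s c w) (@shift D b)).

Fixpoint subst G a (t : tm G a) : forall D, sb G D -> tm D a :=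
  match t in Defs.tm _ G a return forall D, sb G D -> tm D a with
  | TVar G a v => fun D s => s a v
  | TCst G c => fun D s => TCst ctype D c
  | TEq G a => fun D s => TEq ctype D a
  | TNeg G => fun D s => TNeg ctype D
  | TAnd G => fun D s => TAnd ctype D
  | TOr G => fun D s => TOr ctype D
  | TApp G a b f u => fun D s => TApp (subst f s) (subst u s)
  | TLam G a b t => fun D s => TLam (subst t (up_sb s))
  end.

Lemma var_case G b (P : forall c, var (b :: G) c -> Prop) :
  P b (VZ G b) -> (forall c w, P c (VS b w)) -> forall c v, P c v.
Proof. move=> H0 HS c v; dependent destruction v; auto. Qed.

Lemma var_nil a (v : var nil a) : False.
Proof.
move: v; suff : forall G (v : var G a), G = nil -> False by move=> H v; exact: H v erefl.
by move=> G [].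
Qed.

Lemma fext2 G (T : ty -> Type) (f g : forall a, var G a -> T a) :
  (forall a v, f a v = g a v) -> f = g.
Proof.
move=> H; apply: functional_extensionality_dep => a.
by apply: functional_extensionality => v.
Qed.

Lemma up_ren_comp G D E b (xi : rn G D) (ze : rn D E) :
  (fun c v => up_ren ze (up_ren xi v)) = up_ren (b := b) (fun c v => ze c (xi c v)).
Proof. by apply: (fext2 (T := fun c => var (b :: E) c)); apply: var_case. Qed.

Lemma ren_ren G a (t : tm G a) D E (xi : rn G D) (ze : rn D E) :
  ren (ren t xi) ze = ren t (fun c v => ze c (xi c v)).
Proof.
elim: t D E xi ze => //= {G a} [G a b f IHf u IHu | G a b t IH] D E xi ze.
  by rewrite IHf IHu.
by rewrite IH up_ren_comp.
Qed.

Lemma sb_ren G a (t : tm G a) D E (xi : rn G D) (s : sb D E) :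
  subst (ren t xi) s = subst t (fun c v => s c (xi c v)).
Proof.
elim: t D E xi s => //= {G a} [G a b f IHf u IHu | G a b t IH] D E xi s.
  by rewrite IHf IHu.
rewrite IH; congr (TLam (subst t _)).
by apply: (fext2 (T := fun c => tm (a :: E) c)); apply: var_case.
Qed.

Lemma ren_sb G a (t : tm G a) D E (s : sb G D) (xi : rn D E) :
  ren (subst t s) xi = subst t (fun c v => ren (s c v) xi).
Proof.
elim: t D E s xi => //= {G a} [G a b f IHf u IHu | G a b t IH] D E s xi.
  by rewrite IHf IHu.
rewrite IH; congr (TLam (subst t _)).
apply: (fext2 (T := fun c => tm (a :: E) c)); apply: var_case => //= c w.
by rewrite /up_sb /= !ren_ren.
Qed.

Lemma sb_sb G a (t : tm G a) D E (s : sb G D) (s' : sb D E) :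
  subst (subst t s) s' = subst t (fun c v => subst (s c v) s').
Proof.
elim: t D E s s' => //= {G a} [G a b f IHf u IHu | G a b t IH] D E s s'.
  by rewrite IHf IHu.
rewrite IH; congr (TLam (subst t _)).
apply: (fext2 (T := fun c => tm (a :: E) c)); apply: var_case => //= c w.
by rewrite /up_sb /= sb_ren ren_sb.
Qed.

Lemma sb_id G a (t : tm G a) : subst t (@TVar C ctype G) = t.
Proof.
elim: t => //= {G a} [G a b f IHf u IHu | G a b t IH]; first by rewrite IHf IHu.
suff -> : up_sb (b := a) (@TVar C ctype G) = @TVar C ctype (a :: G) by rewrite IH.
by apply: (fext2 (T := fun c => tm (a :: G) c)); apply: var_case.
Qed.

Lemma sb_closed a (t : tm nil a) (s : sb nil nil) : subst t s = t.
Proof.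
suff -> : s = @TVar C ctype nil by rewrite sb_id.
by apply: (fext2 (T := fun c => tm nil c)) => c v; case: (var_nil v).
Qed.

Lemma sb_up_scons G a b (t : tm (a :: G) b) (s : sb G nil) (u : tm nil a) :
  subst (subst t (up_sb s)) (scons u (@TVar C ctype nil)) = subst t (scons u s).
Proof.
rewrite sb_sb; congr (subst t _).
apply: (fext2 (T := fun c => tm nil c)); apply: var_case => //= c w.
by rewrite /up_sb /= sb_ren sb_closed.
Qed.
End Syntax.

Local Notation tand := Defs.tand.
Fixpoint AllT (T : Type) (P : T -> Prop) (l : seq T) : Prop :=
  match l with [::] => True | x :: l' => P x /\ AllT P l' end.
Fixpoint ExT (T : Type) (P : T -> Prop) (l : seq T) : Prop :=
  match l with [::] => False | x :: l' => P x \/ ExT P l' end.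

Section S.
Variables (C : Type) (ctype : C -> ty).
Variable I : interp ctype.

Lemma tv_inj (x y : dom I To) : tv x = tv y -> x = y.
Proof. by case: (tv_bij I) => g gK _ E; rewrite -[x]gK -[y]gK E. Qed.

Definition den_inv G a (t : tm ctype G a) : env I G -> dom I a -> Prop :=
  match t in tm _ G a return env I G -> dom I a -> Prop with
  | TVar G a v => fun r w => w = lookup v r
  | TCst G c => fun r w => w = cval I c
  | TEq G a => fun r e => forall x y, tv (app (app e x) y) = true <-> x = y
  | TNeg G => fun r e => forall x, tv (app e x) = ~~ tv x
  | TAnd G => fun r e => forall x y, tv (app (app e x) y) = tv x && tv y
  | TOr G => fun r e => forall x y, tv (app (app e x) y) = tv x || tv y
  | TApp G a b f u => fun r w => exists vf vu, den f r vf /\ den u r vu /\ w = app vf vu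
  | TLam G a b t => fun r e => forall x, den t (x, r) (app e x)
  end.

Lemma den_invP G a (t : tm ctype G a) r v : den t r v -> den_inv t r v.
Proof. by case => //=; eauto. Qed.

Lemma den_fun G a (t : tm ctype G a) (r : env I G) (v1 v2 : dom I a) :
  den t r v1 -> den t r v2 -> v1 = v2.
Proof.
move=> H; elim: H v2 => {G a t r v1}.
- by move=> G a v r v2 /den_invP.
- by move=> G c r v2 /den_invP.
- move=> G a r e He v2 /den_invP /= H.
  apply: app_ext => x; apply: app_ext => y; apply: tv_inj.
  apply/idP/idP => X; [apply/H; apply/He | apply/He; apply/H] => //.
- move=> G r e He v2 /den_invP /= H.
  by apply: app_ext => x; apply: tv_inj; rewrite He H.
- move=> G r e He v2 /den_invP /= H.
  by apply: app_ext => x; apply: app_ext => y; apply: tv_inj; rewrite He H.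
- move=> G r e He v2 /den_invP /= H.
  by apply: app_ext => x; apply: app_ext => y; apply: tv_inj; rewrite He H.
- move=> G a b f t r vf vt Hf IHf Ht IHt v2 /den_invP /= [vf' [vt' [H1 [H2 ->]]]].
  by rewrite (IHf _ H1) (IHt _ H2).
- move=> G a b t r e He IH v2 /den_invP /= H2.
  by apply: app_ext => x; apply: IH.
Qed.

Hypothesis HI : is_interp I.

Lemma holds_den (p : sentence ctype) (v : dom I To) :
  den p (tt : env I nil) v -> (holds I p <-> tv v = true).
Proof.
move=> Hv; split; first by case=> w [Hw <-]; rewrite (den_fun Hv Hw).
by move=> E; exists v.
Qed.

Lemma ex_den G a (t : tm ctype G a) (r : env I G) : exists v, den t r v.
Proof. exact: HI. Qed.

Lemma holds_tneg p : holds I (tneg p) <-> ~ holds I p.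
Proof.
have [v Hv] := ex_den p tt; have [e He] := ex_den (TNeg ctype nil) tt.
have H := DApp He Hv; rewrite (holds_den H) (holds_den Hv).
move/den_invP: He => /= ->; case: (tv v) => //=; split => //; by move/(_ erefl).
Qed.

Lemma holds_tand p q : holds I (tand p q) <-> holds I p /\ holds I q.
Proof.
have [v Hv] := ex_den p tt; have [w Hw] := ex_den q tt.
have [e He] := ex_den (TAnd ctype nil) tt.
have H := DApp (DApp He Hv) Hw; rewrite (holds_den H) (holds_den Hv) (holds_den Hw).
move/den_invP: He => /= ->; by case: (tv v); case: (tv w); intuition.
Qed.

Lemma holds_tor p q : holds I (tor p q) <-> holds I p \/ holds I q.
Proof.
have [v Hv] := ex_den p tt; have [w Hw] := ex_den q tt.
have [e He] := ex_den (TOr ctype nil) tt.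
have H := DApp (DApp He Hv) Hw; rewrite (holds_den H) (holds_den Hv) (holds_den Hw).
move/den_invP: He => /= ->; by case: (tv v); case: (tv w); intuition.
Qed.

Lemma holds_teq a (r s : tm ctype nil a) vr vs :
  den r (tt : env I nil) vr -> den s (tt : env I nil) vs -> (holds I (teq r s) <-> vr = vs).
Proof.
move=> Hr Hs; have [e He] := ex_den (TEq ctype nil a) tt.
have H := DApp (DApp He Hr) Hs; rewrite (holds_den H).
by move/den_invP: He => /=.
Qed.

Lemma holds_ttop : holds I (ttop ctype).
Proof.
have [v Hv] := ex_den (tid ctype) tt.
by apply/(holds_teq Hv Hv).
Qed.

Fixpoint AllS (P : sentence ctype -> Prop) (l : seq (sentence ctype)) : Prop :=
  match l with [::] => True | p :: l' => P p /\ AllS P l' end.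

Lemma holds_bigAnd l : holds I (bigAnd l) <-> AllS (holds I) l.
Proof.
elim: l => [|p l IH] /=; first by split => // _; exact: holds_ttop.
case: l IH => [|q l] IH /=; first by intuition.
rewrite holds_tand IH /=; by intuition.
Qed.

Definition idG G : tm ctype G (Arr To To) := TLam (TVar ctype (VZ G To)).
Definition ttopG G : tm ctype G To := TApp (TApp (TEq ctype G (Arr To To)) (idG G)) (idG G).

Lemma den_ttopG G (r : env I G) v : den (ttopG G) r v -> tv v = true.
Proof.
move/den_invP => /= [vf [vu [/den_invP /= [e [vi [He [Hi ->]]]] [Hu ->]]]].
move/den_invP: He => /= He; apply/He; exact: den_fun Hi Hu.
Qed.

Lemma dom_inh a : inhabited (dom I a).
Proof.
elim: a => [||a _ b [y]].
- by case: (tv_bij I) => g _ _; constructor; exact: g true.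
- exact: dom_i.
- have [e _] := ex_den (TLam (a:=a) (TVar ctype (VS a (VZ nil b)))) ((y, tt) : env I [:: b]).
  by constructor.
Qed.

Lemma sep_inhabited : separating I -> forall a, exists t : tm ctype nil a, True.
Proof.
move=> Hs a.
have [e1 H1] := ex_den (TLam (ttopG [:: a])) (tt : env I nil).
have [e0 H0] := ex_den (TLam (TApp (TNeg ctype _) (ttopG [:: a]))) (tt : env I nil).
have [x] := dom_inh a.
suff N : e1 <> e0.
  by have [t [wr [ws _]]] := Hs _ _ _ _ _ _ H1 H0 N; exists t.
move=> E; move/den_invP: H1 => /= /(_ x); move/den_invP: H0 => /= /(_ x).
move/den_invP => /= [vf [vu [/den_invP /= Hn [Hu E0]]]].
rewrite E E0 => /den_ttopG; by rewrite Hn (den_ttopG Hu).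
Qed.

Lemma den_app_inv a b (f : tm ctype nil (Arr a b)) t w :
  den (TApp f t) (tt : env I nil) w ->
  exists vf vt, den f (tt : env I nil) vf /\ den t (tt : env I nil) vt /\ w = app vf vt.
Proof. by move/den_invP. Qed.

Lemma holds_teq_app a b (r s : tm ctype nil (Arr a b)) t :
  holds I (teq r s) -> holds I (teq (TApp r t) (TApp s t)).
Proof.
have [vr Hr] := ex_den r tt; have [vs Hs] := ex_den s tt; have [vt Ht] := ex_den t tt.
rewrite (holds_teq Hr Hs) (holds_teq (DApp Hr Ht) (DApp Hs Ht)); by move=> ->.
Qed.

Lemma AllS_mapT (T : Type) (f : T -> sentence ctype) P (l : seq T) :
  AllS P (map f l) <-> AllT (fun x => P (f x)) l.
Proof. elim: l => //= x l ->; tauto. Qed.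

Lemma holds_gaif_conj a b (r s : tm ctype nil (Arr a b)) L :
  holds I (gaif_conj r s L) <-> AllT (fun t => holds I (teq (TApp r t) (TApp s t))) L.
Proof. rewrite /gaif_conj holds_bigAnd; elim: L => //= t L IH; split => -[H1 H2]; split => //; exact/IH. Qed.

Lemma entails_gaif a b (r s : tm ctype nil (Arr a b)) L :
  holds I (teq r s) -> holds I (gaif_conj r s L).
Proof.
move=> H; rewrite holds_gaif_conj; elim: L => //= t L IH; split => //.
exact: holds_teq_app.
Qed.

Lemma not_gaif a b (r s : tm ctype nil (Arr a b)) L t :
  ExT (fun u => u = t) L -> ~ holds I (teq (TApp r t) (TApp s t)) -> ~ holds I (gaif_conj r s L).
Proof.
rewrite holds_gaif_conj => Ht N; elim: L Ht => //= u L IH [-> | H] [H1 H2]; [exact: N H1 | exact: IH H H2].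
Qed.
End S.

Section SemSub.
Variables (C : Type) (ctype : C -> ty).
Variable I : interp ctype.

Lemma den_ren G a (t : tm ctype G a) (r : env I G) v :
  den t r v -> forall D (xi : rn G D) (h : env I D),
  (forall c (x : var G c), lookup (xi c x) h = lookup x r) -> den (ren t xi) h v.
Proof.
elim => {G a t r v} /=; try by constructor.
- move=> G a v r D xi h H; rewrite -H; exact: DVar.
- move=> G a b f t r vf vt _ IHf _ IHt D xi h H; apply: DApp; [exact: IHf | exact: IHt].
- move=> G a b t r e _ IH D xi h H; apply: DLam => x; apply: IH.
  exact: var_case.
Qed.

Lemma den_subst G a (t : tm ctype G a) (r : env I G) v :
  den t r v -> forall D (s : sb ctype G D) (h : env I D),
  (forall c (x : var G c), den (s c x) h (lookup x r)) -> den (subst t s) h v.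
Proof.
elim => {G a t r v} /=; try by constructor.
- by move=> G a v r D s h H; apply: H.
- move=> G a b f t r vf vt _ IHf _ IHt D s h H; apply: DApp; [exact: IHf | exact: IHt].
- move=> G a b t r e _ IH D s h H; apply: DLam => x; apply: IH.
  apply: var_case => /=; first exact: (DVar (VZ D a) (x, h)).
  move=> c w; apply: den_ren; first exact: H.
  by [].
Qed.
End SemSub.

Section Beta.
Variables (C : Type) (ctype : C -> ty).
Variable I : interp ctype.
Hypothesis HI : is_interp I.

Lemma holds_beta a b (t : tm ctype [:: a] b) (u : tm ctype nil a) :
  holds I (teq (TApp (TLam t) u) (subst t (scons u (@TVar C ctype nil)))).
Proof.
have [e He] := ex_den HI (TLam t) tt; have [vu Hu] := ex_den HI u tt.
have H1 := DApp He Hu.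
have H2 : den (subst t (scons u (@TVar C ctype nil))) (tt : env I nil) (app e vu).
  move/den_invP: He => /= /(_ vu) Ht; apply: (den_subst Ht).
  apply: var_case => //= c w; case: (var_nil w).
by apply/(holds_teq HI H1 H2).
Qed.
End Beta.

Section Prob.
Variables (C : Type) (ctype : C -> ty).
Local Notation sentence := (sentence ctype).
Local Open Scope ring_scope.
Local Open Scope R_scope.

Definition models (p : sentence) (I : interp ctype) := is_interp I /\ holds I p.
Definition entails (p q : sentence) := forall I, is_interp I -> holds I p -> holds I q.
Definition equiv (p q : sentence) := forall I, is_interp I -> (holds I p <-> holds I q).

Variable mu : sentence -> R.
Hypothesis Hmu : probability mu.

Lemma mu_ge0 p : 0 <= mu p. Proof. by case: Hmu => H _; apply: H. Qed.
Lemma mu_valid p : valid p -> mu p = 1. Proof. by case: Hmu => _ [H _]; apply: H. Qed.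
Lemma mu_add p q : (forall I, is_interp I -> holds I p -> holds I q -> False) ->
  mu (tor p q) = mu p + mu q.
Proof.
move=> H; case: Hmu => _ [_]; apply => I HI.
by rewrite holds_tneg // holds_tand // => -[]; apply: H.
Qed.

Lemma mu_neg p : mu p + mu (tneg p) = 1.
Proof.
rewrite -(mu_add (p:=p) (q:=tneg p)); last by move=> I HI ? /(holds_tneg HI); auto.
apply: mu_valid => I HI; rewrite holds_tor //; rewrite holds_tneg //; tauto.
Qed.

Lemma mu_equiv p q : equiv p q -> mu p = mu q.
Proof.
move=> E.
have H1 : mu (tor p (tneg q)) = mu p + mu (tneg q).
  apply: mu_add => I HI /(E I HI) Hq /(holds_tneg HI); auto.
have H2 : mu (tor p (tneg q)) = 1.
  apply: mu_valid => I HI; rewrite holds_tor // holds_tneg // (E I HI); tauto.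
have := mu_neg q; lra.
Qed.

Lemma mu_split p q : mu p = mu (tand p q) + mu (tand p (tneg q)).
Proof.
rewrite -mu_add; last by move=> I HI; rewrite !holds_tand // holds_tneg //; tauto.
apply: mu_equiv => I HI; rewrite holds_tor // !holds_tand // holds_tneg //; tauto.
Qed.

Lemma mu_mono p q : entails p q -> mu p <= mu q.
Proof.
move=> E; rewrite (mu_split q p).
rewrite (@mu_equiv (tand q p) p); first by have := mu_ge0 (tand q (tneg p)); lra.
move=> I HI; rewrite holds_tand //; have := E I HI; tauto.
Qed.

Lemma mu_unsat p : (forall I, is_interp I -> ~ holds I p) -> mu p = 0.
Proof.
move=> H; have := mu_neg p; rewrite (@mu_valid (tneg p)); first lra.
by move=> I HI; rewrite holds_tneg //; apply: H.
Qed.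

Lemma mu_or_le p q : mu (tor p q) <= mu p + mu q.
Proof.
rewrite (@mu_equiv (tor p q) (tor p (tand q (tneg p)))).
  rewrite mu_add; last by move=> I HI; rewrite holds_tand // holds_tneg //; tauto.
  have : mu (tand q (tneg p)) <= mu q by apply: mu_mono => I HI; rewrite holds_tand //; tauto.
  lra.
move=> I HI; rewrite !holds_tor // holds_tand // holds_tneg //; tauto.
Qed.

Lemma mu_pos_sat p : 0 < mu p -> exists I, is_interp I /\ holds I p.
Proof.
move=> H; apply: Classical_Prop.NNPP => N.
have := mu_unsat (p := p); rewrite -/(_ = _) => E.
suff : mu p = 0 by lra.
apply: E => I HI Hp; apply: N; by exists I.
Qed.
End Prob.

From Stdlib Require Import ClassicalEpsilon.

Section Forward.
Variables (C : Type) (ctype : C -> ty).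
Local Notation sentence := (sentence ctype).
Local Open Scope ring_scope.
Local Open Scope R_scope.

Fixpoint ExS (P : sentence -> Prop) (l : seq sentence) : Prop :=
  match l with [::] => False | p :: l' => P p \/ ExS P l' end.

Definition bigOr := fix bigOr (l : seq sentence) : sentence :=
  match l with [::] => tneg (ttop ctype) | p :: l' => tor p (bigOr l') end.

Lemma holds_bigOr I (HI : is_interp I) l : holds I (bigOr l) <-> ExS (holds I) l.
Proof.
elim: l => [|p l IH] /=; last by rewrite holds_tor // IH.
rewrite holds_tneg //; split => // H; apply: H; exact: holds_ttop.
Qed.

Lemma AllS_map (T : eqType) (f : T -> sentence) (P : sentence -> Prop) l :
  AllS P (map f l) <-> forall x, x \in l -> P (f x).
Proof.
elim: l => [|y l IH] /=; first by split.
rewrite IH; split.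
- by move=> [Hy Hl] x; rewrite in_cons => /orP [/eqP -> | /Hl].
- move=> H; split; first by apply: H; rewrite mem_head.
  by move=> x Hx; apply: H; rewrite in_cons Hx orbT.
Qed.

Lemma ExS_map (T : eqType) (f : T -> sentence) (P : sentence -> Prop) l :
  ExS P (map f l) <-> exists x, x \in l /\ P (f x).
Proof.
elim: l => [|y l IH] /=; first by split => // -[x []].
rewrite IH; split.
- case=> [H | [x [Hx H]]]; first by exists y; rewrite mem_head.
  by exists x; rewrite in_cons Hx orbT.
- move=> [x]; rewrite in_cons => -[/orP [/eqP -> | Hx] H]; auto.
  by right; exists x.
Qed.

Variable n : nat.
Variable phi : 'I_n -> sentence.

Lemma holds_psi I (HI : is_interp I) S :
  holds I (psi phi S) <-> forall i, (holds I (phi i) <-> i \in S).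
Proof.
rewrite /psi holds_tand // !holds_bigAnd // !AllS_map; split.
- move=> [H1 H2] i; split => Hi.
  + apply: Classical_Prop.NNPP => N.
    have : i \in enum (~: S) by rewrite mem_enum in_setC; apply/negP.
    by move/H2/(holds_tneg HI).
  + by apply: H1; rewrite mem_enum.
- move=> H; split => i; rewrite mem_enum; first by move/H.
  by rewrite in_setC => /negP Hi; apply/(holds_tneg HI); rewrite H.
Qed.

Definition setOf I : {set 'I_n} :=
  [set i | if excluded_middle_informative (holds I (phi i)) then true else false].

Lemma holds_psi_setOf I (HI : is_interp I) : holds I (psi phi (setOf I)).
Proof.
rewrite holds_psi // => i; rewrite inE.
by case: excluded_middle_informative.
Qed.

Lemma psi_uniq I (HI : is_interp I) S S' :
  holds I (psi phi S) -> holds I (psi phi S') -> S = S'.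
Proof.
rewrite !holds_psi // => H1 H2; apply/setP => i.
apply/idP/idP; by [move/H1/H2 | move/H2/H1].
Qed.

Variable mu : sentence -> R.
Hypothesis Hmu : probability mu.

Lemma mu_bigOr_psi (l : seq {set 'I_n}) : uniq l ->
  mu (bigOr (map (psi phi) l)) = \sum_(S <- l) mu (psi phi S).
Proof.
elim: l => [|S l IH] /=.
  move=> _; rewrite big_nil; apply: mu_unsat => // I HI.
  rewrite holds_tneg //; apply; exact: holds_ttop.
move=> /andP [HS Hu]; rewrite big_cons -IH //.
apply: mu_add => // I HI H1 /(holds_bigOr HI) /ExS_map [S' [HS' H2]].
have E := psi_uniq HI H1 H2; by rewrite E HS' in HS.
Qed.

Lemma sum_psi : \sum_(S : {set 'I_n}) mu (psi phi S) = 1.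
Proof.
rewrite -(mu_bigOr_psi (index_enum_uniq _)); apply: mu_valid => // I HI.
apply/(holds_bigOr HI)/ExS_map; exists (setOf I); split.
  exact: mem_index_enum.
exact: holds_psi_setOf.
Qed.

Lemma sum_psi_i i : \sum_(S : {set 'I_n} | i \in S) mu (psi phi S) = mu (phi i).
Proof.
rewrite -big_filter -mu_bigOr_psi; last by apply: filter_uniq; exact: index_enum_uniq.
apply: mu_equiv => // I HI; rewrite holds_bigOr // ExS_map; split.
- move=> [S [HS H]]; rewrite mem_filter in HS; case/andP: HS => HS _.
  by move: H; rewrite holds_psi // => /(_ i) ->.
- move=> Hi; exists (setOf I); split; last exact: holds_psi_setOf.
  rewrite mem_filter mem_index_enum andbT inE.
  by case: excluded_middle_informative.
Qed.

Lemma forward_sys (sat : sentence -> Prop) :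
  (forall S, ~ sat (psi phi S) -> mu (psi phi S) = 0) ->
  lin_system sat phi mu.
Proof.
move=> H; exists (fun S => mu (psi phi S)); split; first exact: sum_psi.
split; first by move=> i; exact: sum_psi_i.
split; last exact: H.
by move=> S; apply: mu_ge0.
Qed.
End Forward.

Section Backward.
Variables (C : Type) (ctype : C -> ty).
Local Notation sentence := (sentence ctype).
Local Open Scope ring_scope.
Local Open Scope R_scope.
Variable n : nat.
Variable phi : 'I_n -> sentence.
Variable Q : interp ctype -> Prop.
Variable a : {set 'I_n} -> R.
Hypothesis Hsum : \sum_(S : {set 'I_n}) a S = 1.
Hypothesis Hpos : forall S, 0 <= a S.
Hypothesis Hzero : forall S, ~ (exists I, is_interp I /\ Q I /\ holds I (psi phi S)) -> a S = 0.

Definition goodI S I := is_interp I /\ Q I /\ holds I (psi phi S).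

Definition pickI S : option (interp ctype) :=
  match excluded_middle_informative (exists I, goodI S I) with
  | left H => Some (proj1_sig (constructive_indefinite_description _ H))
  | right _ => None
  end.

Lemma pickP S : match pickI S with Some M => goodI S M | None => a S = 0 end.
Proof.
rewrite /pickI; case: excluded_middle_informative => H.
  by case: constructive_indefinite_description.
exact: Hzero.
Qed.

Definition hb (I : interp ctype) (p : sentence) : R := if excluded_middle_informative (holds I p) then 1 else 0.

Definition ind S p : R := match pickI S with Some M => hb M p | None => 0 end.

Definition muB p : R := \sum_(S : {set 'I_n}) a S * ind S p.

Lemma ind_ge0 S p : 0 <= ind S p.
Proof. rewrite /ind /hb; case: (pickI S) => [I|]; [case: excluded_middle_informative => _ /=; lra | lra]. Qed.

Lemma muB_ge0 p : 0 <= muB p.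
Proof.
apply/RleP; apply: sumr_ge0 => S _; apply/RleP.
apply: Rmult_le_pos; [exact: Hpos | exact: ind_ge0].
Qed.

Lemma muB_eq_sum p (F : {set 'I_n} -> R) :
  (forall S I, goodI S I -> hb I p = F S) ->
  muB p = \sum_(S : {set 'I_n}) a S * F S.
Proof.
move=> H; apply: eq_bigr => S _; rewrite /ind; have := pickP S.
case: pickI => [I HI | ->]; first by rewrite (H _ _ HI).
by rewrite !mul0r.
Qed.

Lemma muB_valid p : valid p -> muB p = 1.
Proof.
move=> Hv; rewrite (@muB_eq_sum p (fun _ => 1)).
  rewrite -[X in _ = X]Hsum; apply: eq_bigr => S _; by rewrite -RmultE Rmult_1_r.
move=> S I [HI _]; rewrite /hb; case: excluded_middle_informative => //.
by move=> N; case: (N (Hv I HI)).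
Qed.

Lemma ind_add S p q : valid (tneg (Defs.tand p q)) -> ind S (tor p q) = ind S p + ind S q.
Proof.
move=> Hv; rewrite /ind; have := pickP S; case: (pickI S) => [I [HI _]|_]; last lra.
have := Hv I HI; rewrite holds_tneg // holds_tand // => Hx.
have E := holds_tor HI p q.
rewrite /hb; do 3 case: excluded_middle_informative => /=; intros; try lra; tauto.
Qed.

Lemma muB_add p q : valid (tneg (Defs.tand p q)) -> muB (tor p q) = muB p + muB q.
Proof.
move=> Hv; rewrite /muB RplusE -big_split /=; apply: eq_bigr => S _.
by rewrite ind_add // RplusE mulrDr.
Qed.

Lemma muB_prob : probability muB.
Proof.
split; first exact: muB_ge0.
split; first exact: muB_valid.
exact: muB_add.
Qed.

Lemma muB_phi i : muB (phi i) = \sum_(S : {set 'I_n} | i \in S) a S.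
Proof.
rewrite (@muB_eq_sum (phi i) (fun S => if i \in S then 1 else 0)).
  rewrite [RHS]big_mkcond /=; apply: eq_bigr => S _.
  case: (i \in S); by rewrite -RmultE ?Rmult_1_r ?Rmult_0_r.
move=> S I [HI [_ H]]; move: H; rewrite holds_psi // => /(_ i) E.
rewrite /hb; case: excluded_middle_informative; case: (i \in S) E => //; intuition.
Qed.

Hypothesis HQ : forall M, Q M -> separating M.

Lemma some_pick : exists S M, pickI S = Some M.
Proof.
apply: Classical_Prop.NNPP => N.
have E : \sum_(S : {set 'I_n}) a S = 0.
  rewrite big1 // => S _; have := pickP S; case E: (pickI S) => [M|] // _.
  by case: N; exists S, M.
move: Hsum; rewrite E => H; apply: R1_neq_R0; by rewrite H.
Qed.

Lemma exL a0 b (r s : tm ctype nil (Arr a0 b)) (l : seq {set 'I_n}) :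
  exists L : seq (tm ctype nil a0), forall S, S \in l -> forall M, pickI S = Some M ->
    ~ holds M (teq r s) -> exists t, ExT (fun u => u = t) L /\ ~ holds M (teq (TApp r t) (TApp s t)).
Proof.
elim: l => [|S l [L HL]]; first by exists [::].
have := pickP S; case E: (pickI S) => [M|] HM; last first.
  exists L => S'; rewrite in_cons => /orP [/eqP -> | /HL //]; by rewrite E.
have [HM1 [HM2 _]] := HM.
case: (Classical_Prop.classic (holds M (teq r s))) => Hrs.
  exists L => S'; rewrite in_cons => /orP [/eqP -> | /HL //]; rewrite E => M' [<-] //.
have [vr Hr] := ex_den HM1 r tt; have [vs Hs] := ex_den HM1 s tt.
have Nv : vr <> vs by move=> Ev; apply: Hrs; apply/(holds_teq HM1 Hr Hs).
have [t [wr [ws [Hwr [Hws Nw]]]]] := HQ HM2 Hr Hs Nv.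
exists (t :: L) => S'; rewrite in_cons => /orP [/eqP -> | /HL H]; last first.
  move=> M' HM' N; have [u [Hu Nu]] := H M' HM' N; exists u; split => //=; by right.
rewrite E => M' [<-] _; exists t; split; first by left.
by move/(holds_teq HM1 Hwr Hws).
Qed.

Lemma muB_gaifman : gaifman muB.
Proof.
move=> a0 b r s; split.
  move=> t ts; apply: (mu_mono muB_prob) => M HM; exact: entails_gaif.
move=> eps Heps.
have [S0 [M0 E0]] := some_pick.
have := pickP S0; rewrite E0 => -[HM0 [HQ0 _]].
have [t0 _] := sep_inhabited HM0 (HQ HQ0) a0.
have [L HL] := exL r s (index_enum {set 'I_n}).
exists t0, L.
suff -> : muB (gaif_conj r s (t0 :: L)) = muB (teq r s) by lra.
apply: eq_bigr => S _; congr (_ * _); rewrite /ind.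
have := pickP S; case E: (pickI S) => [M|] // [HM _]; rewrite /hb.
have Hc : holds M (gaif_conj r s (t0 :: L)) <-> holds M (teq r s).
  split; last exact: entails_gaif.
  move=> Hg; apply: Classical_Prop.NNPP => H1.
  have [u [Hu Nu]] := HL S (mem_index_enum _) M E H1.
  exact: (not_gaif HM (L := t0 :: L) (or_intror Hu) Nu).
do 2 case: excluded_middle_informative => /=; intros; try tauto; reflexivity.
Qed.
End Backward.

Section Count.
Variables (C : Type) (ctype : C -> ty).
Variable f : C -> nat.
Hypothesis finj : injective f.
Local Notation tree := (GenTree.tree nat).

Fixpoint ty_code (a : ty) : tree :=
  match a with
  | To => GenTree.Node 0 [::]
  | Ti => GenTree.Node 1 [::]
  | Arr a b => GenTree.Node 2 [:: ty_code a; ty_code b]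
  end.

Lemma ty_code_inj : injective ty_code.
Proof. elim=> [||a IHa b IHb] [||a' b'] //= [] /IHa -> /IHb -> //. Qed.

Fixpoint var_code G a (v : var G a) : tree :=
  match v with
  | VZ _ _ => GenTree.Node 0 [::]
  | VS _ _ _ w => GenTree.Node 1 [:: var_code w]
  end.

Lemma var_code_inj G a (v w : var G a) : var_code v = var_code w -> v = w.
Proof.
elim: v w => [G0 a0 | G0 a0 b0 v IH] w; dependent destruction w => //=.
by case=> /IH ->.
Qed.

Fixpoint tm_code G a (t : tm ctype G a) : tree :=
  match t with
  | TVar _ _ v => GenTree.Node 0 [:: var_code v]
  | TCst _ c => GenTree.Node 1 [:: GenTree.Leaf (f c)]
  | TEq _ a => GenTree.Node 2 [:: ty_code a]
  | TNeg _ => GenTree.Node 3 [::]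
  | TAnd _ => GenTree.Node 4 [::]
  | TOr _ => GenTree.Node 5 [::]
  | TApp _ a b g u => GenTree.Node 6 [:: ty_code a; tm_code g; tm_code u]
  | TLam _ a b t => GenTree.Node 7 [:: tm_code t]
  end.

Lemma tm_code_inj_h G a (t1 : tm ctype G a) : forall G' a' (t2 : tm ctype G' a'),
  tm_code t1 = tm_code t2 -> G = G' -> a = a' -> JMeq t1 t2.
Proof.
elim: t1 => [G0 a0 v|G0 c|G0 a0|G0|G0|G0|G0 a0 b0 g IHg u IHu|G0 a0 b0 t IH] G' a' t2;
  case: t2 => [G1 a1 v'|G1 c'|G1 a1|G1|G1|G1|G1 a1 b1 g' u'|G1 a1 b1 t'] /=;
  try (intro H; discriminate H).
- case=> E EG Ea; subst; by rewrite (var_code_inj E).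
- case=> /finj E EG _; by subst.
- by case=> /ty_code_inj -> -> _.
- by move=> _ -> _.
- by move=> _ -> _.
- by move=> _ -> _.
- case=> /ty_code_inj Ea Eg Eu EG Eb; subst.
  have := IHg _ _ g' Eg erefl erefl; have := IHu _ _ u' Eu erefl erefl.
  by move=> H1 H2; rewrite (JMeq_eq H1) (JMeq_eq H2).
- case=> Et EG [Ea Eb]; subst.
  by have H := IH _ _ t' Et erefl erefl; rewrite (JMeq_eq H).
Qed.

Lemma tm_code_inj G a (t1 t2 : tm ctype G a) : tm_code t1 = tm_code t2 -> t1 = t2.
Proof. move=> E; exact: JMeq_eq (tm_code_inj_h E erefl erefl). Qed.

Lemma enum_ex (T : Type) (g : T -> tree) : injective g ->
  exists e : nat -> option T, forall x, exists n, e n = Some x.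
Proof.
move=> ginj.
exists (fun n => match excluded_middle_informative (exists x, pickle (g x) = n) with
  | left H => Some (proj1_sig (constructive_indefinite_description _ H))
  | right _ => None end).
move=> x; exists (pickle (g x)).
case: excluded_middle_informative => [H|[]]; last by exists x.
case: constructive_indefinite_description => y /= /(pcan_inj pickleK_inv) /ginj -> //.
Qed.

Definition task := {a : ty & {b : ty & (tm ctype nil (Arr a b) * tm ctype nil (Arr a b))%type}}.

Definition task_code (k : task) : tree :=
  let: existT a (existT b (r, s)) := k in
  GenTree.Node 0 [:: ty_code a; ty_code b; tm_code r; tm_code s].

Lemma task_code_inj : injective task_code.
Proof.
move=> [a [b [r s]]] [a' [b' [r' s']]] /= [/ty_code_inj Ea /ty_code_inj Eb].
subst; by move=> /tm_code_inj -> /tm_code_inj ->.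
Qed.
End Count.

Section Chain.
Variables (C : Type) (ctype : C -> ty).
Local Notation sentence := (sentence ctype).
Local Open Scope ring_scope.
Local Open Scope R_scope.
Variable mu : sentence -> R.
Hypothesis Hmu : probability mu.
Hypothesis Hg : gaifman mu.

Lemma entails_trans (p q r : sentence) : entails p q -> entails q r -> entails p r.
Proof. move=> H1 H2 I HI Hp; exact: H2 I HI (H1 I HI Hp). Qed.

Lemma entails_andl (p q : sentence) : entails (Defs.tand p q) p.
Proof. by move=> I HI; rewrite holds_tand //; case. Qed.
Lemma entails_andr (p q : sentence) : entails (Defs.tand p q) q.
Proof. by move=> I HI; rewrite holds_tand //; case. Qed.

Lemma refine_sent (chi p : sentence) : 0 < mu chi ->
  exists chi', 0 < mu chi' /\ entails chi' chi /\ (entails chi' p \/ entails chi' (tneg p)).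
Proof.
move=> H; have E := mu_split Hmu chi p.
case: (Rlt_or_le 0 (mu (Defs.tand chi p))) => H1.
  exists (Defs.tand chi p); split => //; split; [exact: entails_andl | left; exact: entails_andr].
exists (Defs.tand chi (tneg p)); split; first lra.
split; [exact: entails_andl | right; exact: entails_andr].
Qed.

Lemma ex_pos a b (r s : tm ctype nil (Arr a b)) (X : sentence) L :
  0 < mu (Defs.tand X (tneg (gaif_conj r s L))) ->
  exists t, 0 < mu (Defs.tand X (tneg (teq (TApp r t) (TApp s t)))).
Proof.
elim: L => [|t L IH] H.
  suff : mu (Defs.tand X (tneg (gaif_conj r s [::]))) = 0 by lra.
  apply: (mu_unsat Hmu) => I HI; rewrite holds_tand // holds_tneg // => -[_]; apply.
  exact: holds_ttop.
set A := Defs.tand X (tneg (teq (TApp r t) (TApp s t))).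
set B := Defs.tand X (tneg (gaif_conj r s L)).
have H1 : mu (Defs.tand X (tneg (gaif_conj r s (t :: L)))) <= mu (tor A B).
  apply: (mu_mono Hmu) => I HI.
  rewrite holds_tor // !holds_tand // !holds_tneg // !holds_gaif_conj //= => -[HX N].
  case: (Classical_Prop.classic (holds I (teq (TApp r t) (TApp s t)))) => Ht; last by left.
  by right; split => // N'; apply: N.
have H2 := mu_or_le Hmu A B.
case: (Rlt_or_le 0 (mu A)) => HA; first by exists t.
apply: IH; rewrite -/B; lra.
Qed.

Lemma refine_task (chi : sentence) a b (r s : tm ctype nil (Arr a b)) : 0 < mu chi ->
  exists chi', 0 < mu chi' /\ entails chi' chi /\
    (entails chi' (teq r s) \/ exists t, entails chi' (tneg (teq (TApp r t) (TApp s t)))).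
Proof.
move=> H.
case: (Rlt_or_le 0 (mu (Defs.tand chi (teq r s)))) => H1.
  exists (Defs.tand chi (teq r s)); split => //; split; [exact: entails_andl | left; exact: entails_andr].
set A := Defs.tand chi (tneg (teq r s)).
have HA : 0 < mu A.
  have := mu_split Hmu chi (teq r s); have := mu_ge0 Hmu (Defs.tand chi (teq r s)); rewrite -/A; lra.
have [t0 [ts Hlt]] := (Hg r s).2 (mu A) HA.
set L := t0 :: ts in Hlt.
have E1 := mu_split Hmu (gaif_conj r s L) (teq r s).
have E2 : mu (Defs.tand (gaif_conj r s L) (teq r s)) = mu (teq r s).
  apply: (mu_equiv Hmu) => I HI; rewrite holds_tand //; split; first by case.
  by move=> Hrs; split => //; apply: entails_gaif.
have E3 : mu (Defs.tand A (gaif_conj r s L)) <= mu (Defs.tand (gaif_conj r s L) (tneg (teq r s))).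
  apply: (mu_mono Hmu) => I HI; rewrite !holds_tand //; tauto.
have E4 := mu_split Hmu A (gaif_conj r s L).
have [t Ht] : exists t, 0 < mu (Defs.tand A (tneg (teq (TApp r t) (TApp s t)))).
  apply: (ex_pos (L := L)); unfold L, A in *; lra.
exists (Defs.tand A (tneg (teq (TApp r t) (TApp s t)))); split => //; split.
  apply: entails_trans; [apply: entails_andl | rewrite /A; apply: entails_andl].
right; exists t; exact: entails_andr.
Qed.

Variable es : nat -> option sentence.
Hypothesis Hes : forall p, exists k, es k = Some p.
Variable tk : nat -> option (task ctype).
Hypothesis Htk : forall x, exists k, tk k = Some x.

Definition Req k (chi' : sentence) : Prop :=
  (match es k with Some p => entails chi' p \/ entails chi' (tneg p) | None => True end) /\
  (match tk k with
   | Some (existT a (existT b (r, s))) =>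
       entails chi' (teq r s) \/ exists t, entails chi' (tneg (teq (TApp r t) (TApp s t)))
   | None => True end).

Lemma step_ex k (chi : sentence) : 0 < mu chi -> exists chi', 0 < mu chi' /\ entails chi' chi /\ Req k chi'.
Proof.
move=> H.
have [chi1 [H1 [E1 R1]]] : exists chi1, 0 < mu chi1 /\ entails chi1 chi /\
   (match es k with Some p => entails chi1 p \/ entails chi1 (tneg p) | None => True end).
  case: (es k) => [p|]; last by exists chi; split => //; split => // I HI.
  exact: refine_sent.
have [chi2 [H2 [E2 R2]]] : exists chi2, 0 < mu chi2 /\ entails chi2 chi1 /\
   (match tk k with
   | Some (existT a (existT b (r, s))) =>
       entails chi2 (teq r s) \/ exists t, entails chi2 (tneg (teq (TApp r t) (TApp s t)))
   | None => True end).
  case: (tk k) => [[a [b [r s]]]|]; last by exists chi1; split => //; split => // I HI.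
  exact: refine_task.
exists chi2; split => //; split; first exact: entails_trans E2 E1.
split => //; case: (es k) R1 => // p [R|R]; [left | right]; exact: entails_trans E2 R.
Qed.

Variable psi0 : sentence.
Hypothesis Hpsi0 : 0 < mu psi0.

Fixpoint chain (k : nat) : {chi | 0 < mu chi} :=
  match k with
  | 0 => exist _ psi0 Hpsi0
  | k'.+1 => let c := chain k' in
      let: exist chi' H := constructive_indefinite_description _ (step_ex k' (proj2_sig c)) in
      exist _ chi' (proj1 H)
  end.

Lemma chain_step k : entails (proj1_sig (chain k.+1)) (proj1_sig (chain k)) /\
  Req k (proj1_sig (chain k.+1)).
Proof. rewrite /=; case: constructive_indefinite_description => chi' [H1 [H2 H3]] //. Qed.

Lemma chain_mono j k : leq j k -> entails (proj1_sig (chain k)) (proj1_sig (chain j)).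
Proof.
elim: k => [|k IH]; first by rewrite leqn0 => /eqP -> I HI.
rewrite leq_eqVlt => /orP [/eqP -> | Hjk]; first by move=> I HI.
apply: entails_trans (chain_step k).1 (IH Hjk).
Qed.

Definition Th (p : sentence) : Prop := exists k, entails (proj1_sig (chain k)) p.

Lemma Th_closed2 (p q r : sentence) : Th p -> Th q ->
  (forall I, is_interp I -> holds I p -> holds I q -> holds I r) -> Th r.
Proof.
move=> [j Hj] [k Hk] H; exists (maxn j k) => I HI Hc; apply: H => //.
  apply: Hj => //; exact: (chain_mono (leq_maxl j k)) I HI Hc.
apply: Hk => //; exact: (chain_mono (leq_maxr j k)) I HI Hc.
Qed.

Lemma Th_valid (p : sentence) : valid p -> Th p.
Proof. by move=> H; exists 0%nat => I HI _; apply: H. Qed.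

Lemma Th_closed1 (p r : sentence) : Th p -> (forall I, is_interp I -> holds I p -> holds I r) -> Th r.
Proof.
move=> Hp H; apply: (Th_closed2 Hp Hp) => I HI Hq _; exact: H.
Qed.

Lemma Th_sat k : exists I, is_interp I /\ holds I (proj1_sig (chain k)).
Proof. apply: (mu_pos_sat Hmu); exact: (proj2_sig (chain k)). Qed.

Lemma Th_neg (p : sentence) : Th (tneg p) <-> ~ Th p.
Proof.
split.
  move=> [j Hj] [k Hk]; have [I [HI H]] := Th_sat (maxn j k).
  have := Hj I HI ((chain_mono (leq_maxl j k)) I HI H).
  rewrite holds_tneg // => -[]; exact: Hk I HI ((chain_mono (leq_maxr j k)) I HI H).
move=> N; have [k Hk] := Hes p.
have [_ [R _]] := chain_step k; rewrite Hk in R.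
case: R => R; last by exists k.+1.
by case: N; exists k.+1.
Qed.

Lemma Th_wit a b (r s : tm ctype nil (Arr a b)) : ~ Th (teq r s) ->
  exists t, ~ Th (teq (TApp r t) (TApp s t)).
Proof.
move=> N; have [k Hk] := Htk (existT _ a (existT _ b (r, s))).
have [_ [_ R]] := chain_step k; rewrite Hk in R.
case: R => [R | [t R]]; first by case: N; exists k.+1.
by exists t; apply/Th_neg; exists k.+1.
Qed.

Lemma Th_psi0 : Th psi0.
Proof. by exists 0%nat => I HI. Qed.
End Chain.

From Stdlib Require Import ProofIrrelevance PropExtensionality.

Section TermModel.
Variables (C : Type) (ctype : C -> ty).
Local Notation sentence := (sentence ctype).
Local Notation tm := (tm ctype).
Variable T : sentence -> Prop.
Hypothesis HTneg : forall p, T (tneg p) <-> ~ T p.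
Hypothesis HTcl2 : forall p q r, T p -> T q ->
  (forall I, is_interp I -> holds I p -> holds I q -> holds I r) -> T r.
Hypothesis HTvalid : forall p, valid p -> T p.
Hypothesis HTwit : forall a b (r s : tm nil (Arr a b)), ~ T (teq r s) ->
  exists t, ~ T (teq (TApp r t) (TApp s t)).
Variable t_i : tm nil Ti.

Lemma HTcl1 p r : T p -> (forall I, is_interp I -> holds I p -> holds I r) -> T r.
Proof. move=> Hp H; apply: (HTcl2 Hp Hp) => I HI H1 _; exact: H. Qed.

Definition eqT a (r s : tm nil a) := T (teq r s).

Section Sem.
Variable I : interp ctype.
Hypothesis HI : is_interp I.
Lemma s_refl a (r : tm nil a) : holds I (teq r r).
Proof. have [v Hv] := ex_den HI r tt; exact/(holds_teq HI Hv Hv). Qed.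
Lemma s_sym a (r s : tm nil a) : holds I (teq r s) -> holds I (teq s r).
Proof.
have [v Hv] := ex_den HI r tt; have [w Hw] := ex_den HI s tt.
rewrite (holds_teq HI Hv Hw) (holds_teq HI Hw Hv); by move=> ->.
Qed.
Lemma s_trans a (r s u : tm nil a) : holds I (teq r s) -> holds I (teq s u) -> holds I (teq r u).
Proof.
have [v Hv] := ex_den HI r tt; have [w Hw] := ex_den HI s tt; have [z Hz] := ex_den HI u tt.
rewrite (holds_teq HI Hv Hw) (holds_teq HI Hw Hz) (holds_teq HI Hv Hz); by move=> -> ->.
Qed.
Lemma s_app a b (f g : tm nil (Arr a b)) (u w : tm nil a) :
  holds I (teq f g) -> holds I (teq u w) -> holds I (teq (TApp f u) (TApp g w)).
Proof.
have [v1 H1] := ex_den HI f tt; have [v2 H2] := ex_den HI g tt.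
have [v3 H3] := ex_den HI u tt; have [v4 H4] := ex_den HI w tt.
rewrite (holds_teq HI H1 H2) (holds_teq HI H3 H4) (holds_teq HI (DApp H1 H3) (DApp H2 H4)).
by move=> -> ->.
Qed.
Lemma s_eq_iff (p q : sentence) : holds I (teq p q) -> (holds I p <-> holds I q).
Proof.
have [v Hv] := ex_den HI p tt; have [w Hw] := ex_den HI q tt.
by rewrite (holds_teq HI Hv Hw) (holds_den Hv) (holds_den Hw) => ->.
Qed.
Lemma s_iff_eq (p q : sentence) : (holds I p <-> holds I q) -> holds I (teq p q).
Proof.
have [v Hv] := ex_den HI p tt; have [w Hw] := ex_den HI q tt.
rewrite (holds_teq HI Hv Hw) (holds_den Hv) (holds_den Hw) => H.
apply: tv_inj; move: H; case: (tv v); case: (tv w) => // -[H1 H2]; [discriminate (H1 erefl) | discriminate (H2 erefl)].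
Qed.
End Sem.

Lemma eqT_refl a (r : tm nil a) : eqT r r.
Proof. apply: HTvalid => I HI; exact: s_refl. Qed.
Lemma eqT_sym a (r s : tm nil a) : eqT r s -> eqT s r.
Proof. move=> H; apply: (HTcl1 H) => I HI; exact: s_sym. Qed.
Lemma eqT_trans a (r s u : tm nil a) : eqT r s -> eqT s u -> eqT r u.
Proof. move=> H1 H2; apply: (HTcl2 H1 H2) => I HI; exact: s_trans. Qed.
Lemma eqT_app a b (f g : tm nil (Arr a b)) (u w : tm nil a) :
  eqT f g -> eqT u w -> eqT (TApp f u) (TApp g w).
Proof. move=> H1 H2; apply: (HTcl2 H1 H2) => I HI; exact: s_app. Qed.
Lemma eqT_T (p q : sentence) : eqT p q -> (T p <-> T q).
Proof.
move=> H; split => Hp.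
  by apply: (HTcl2 H Hp) => I HI H1 H2; rewrite -(s_eq_iff HI H1).
by apply: (HTcl2 H Hp) => I HI H1 H2; rewrite (s_eq_iff HI H1).
Qed.
Lemma T_eqT (p q : sentence) : (T p <-> T q) -> eqT p q.
Proof.
move=> H; case: (Classical_Prop.classic (T p)) => Hp.
  have Hq : T q by apply/H.
  by apply: (HTcl2 Hp Hq) => I HI H1 H2; apply: s_iff_eq.
have Hq : ~ T q by move/H.
move/HTneg: Hp => Hp; move/HTneg: Hq => Hq.
apply: (HTcl2 Hp Hq) => I HI; rewrite !holds_tneg // => H1 H2; apply: s_iff_eq => //.
Qed.
Lemma T_and (p q : sentence) : T (Defs.tand p q) <-> T p /\ T q.
Proof.
split.
  move=> H; split; apply: (HTcl1 H) => I HI; rewrite holds_tand //; by case.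
by case=> H1 H2; apply: (HTcl2 H1 H2) => I HI ? ?; rewrite holds_tand.
Qed.
Lemma T_or (p q : sentence) : T (tor p q) <-> T p \/ T q.
Proof.
split.
  move=> H; case: (Classical_Prop.classic (T p)) => Hp; first by left.
  right; move/HTneg: Hp => Hp; apply: (HTcl2 H Hp) => I HI.
  rewrite holds_tor // holds_tneg //; tauto.
case=> H; apply: (HTcl1 H) => I HI ?; rewrite holds_tor //; tauto.
Qed.

Definition D (a : ty) := {P : tm nil a -> Prop | exists t, P = eqT t}.
Definition cls a (t : tm nil a) : D a := exist _ (eqT t) (ex_intro _ t erefl).
Definition rep a (X : D a) : tm nil a :=
  proj1_sig (constructive_indefinite_description _ (proj2_sig X)).

Lemma cls_eq a (t u : tm nil a) : cls t = cls u <-> eqT t u.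
Proof.
split.
  move=> E; have : eqT t = eqT u by move: E; rewrite /cls => -[].
  move=> E'; rewrite E'; exact: eqT_refl.
move=> H; rewrite /cls.
have E : eqT t = eqT u.
  apply: functional_extensionality => x; apply: propositional_extensionality.
  split => Hx; [apply: eqT_trans (eqT_sym H) Hx | apply: eqT_trans H Hx].
move: (ex_intro _ t _) (ex_intro _ u _); rewrite E => p1 p2.
by rewrite (proof_irrelevance _ p1 p2).
Qed.

Lemma cls_rep a (X : D a) : cls (rep X) = X.
Proof.
case: X => P HP; rewrite /rep /=; case: constructive_indefinite_description => t Ht /=.
subst P; rewrite /cls; congr exist; exact: proof_irrelevance.
Qed.

Lemma rep_cls a (t : tm nil a) : eqT (rep (cls t)) t.
Proof. by apply/cls_eq; rewrite cls_rep. Qed.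

Definition asb (P : Prop) : bool := if excluded_middle_informative P then true else false.
Lemma asbP (P : Prop) : asb P = true <-> P.
Proof. rewrite /asb; case: excluded_middle_informative => //; split => //. Qed.
Lemma asb_iff (P Q : Prop) : (P <-> Q) -> asb P = asb Q.
Proof. rewrite /asb => H; case: excluded_middle_informative => p; case: excluded_middle_informative => q //; exfalso; tauto. Qed.

Lemma asb_not (P : Prop) : asb (~ P) = ~~ asb P.
Proof. rewrite /asb; case: (excluded_middle_informative P) => p; case: excluded_middle_informative => q //; exfalso; tauto. Qed.
Lemma asb_and (P Q : Prop) : asb (P /\ Q) = asb P && asb Q.
Proof.
rewrite /asb; case: (excluded_middle_informative P) => p; case: (excluded_middle_informative Q) => q;
  case: excluded_middle_informative => r //; exfalso; tauto.
Qed.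
Lemma asb_or (P Q : Prop) : asb (P \/ Q) = asb P || asb Q.
Proof.
rewrite /asb; case: (excluded_middle_informative P) => p; case: (excluded_middle_informative Q) => q;
  case: excluded_middle_informative => r //; exfalso; tauto.
Qed.

Definition tvM (X : D To) : bool := asb (T (rep X)).
Lemma tvM_cls p : tvM (cls p) = asb (T p).
Proof. apply: asb_iff; apply: eqT_T; exact: rep_cls. Qed.

Definition appM a b (X : D (Arr a b)) (Y : D a) : D b := cls (TApp (rep X) (rep Y)).

Lemma appM_cls a b (f : tm nil (Arr a b)) (u : tm nil a) : appM (cls f) (cls u) = cls (TApp f u).
Proof. apply/cls_eq; apply: eqT_app; exact: rep_cls. Qed.
Lemma appM_cls_l a b (f : tm nil (Arr a b)) (Y : D a) : appM (cls f) Y = cls (TApp f (rep Y)).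
Proof. by rewrite -{1}(cls_rep Y) appM_cls. Qed.

Lemma appM_ext a b (f g : D (Arr a b)) : (forall x, appM f x = appM g x) -> f = g.
Proof.
move=> H; rewrite -(cls_rep f) -(cls_rep g); apply/cls_eq.
apply: Classical_Prop.NNPP => N; have [t Nt] := HTwit N.
apply: Nt; apply/cls_eq; rewrite -!appM_cls !cls_rep; exact: H.
Qed.

Lemma tvM_bij : bijective tvM.
Proof.
exists (fun b => if b then cls (ttop ctype) else cls (tneg (ttop ctype))).
  move=> X; rewrite -(cls_rep X) tvM_cls.
  have Htop : T (ttop ctype) by apply: HTvalid => I HI; exact: holds_ttop.
  case: (Classical_Prop.classic (T (rep X))) => H.
    have -> : asb (T (rep X)) = true by apply/asbP.
    apply/cls_eq; apply: T_eqT; tauto.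
  have -> : asb (T (rep X)) = false by case E: asb => //; move/asbP: E.
  apply/cls_eq; apply: T_eqT; rewrite HTneg; tauto.
have Htop : T (ttop ctype) by apply: HTvalid => I HI; exact: holds_ttop.
case; rewrite tvM_cls; first by apply/asbP.
by case E: asb => //; move/asbP: E; rewrite HTneg.
Qed.

Definition M : interp ctype :=
  @Interp C ctype D appM appM_ext tvM tvM_bij (inhabits (cls t_i)) (fun c => cls (TCst ctype nil c)).

Definition sig_env G (r : env M G) : sb ctype G nil := fun c x => rep (lookup x r).

Lemma den_model G a (t : tm G a) (r : env M G) : den t r (cls (subst t (sig_env r))).
Proof.
elim: t r => [G0 a0 v|G0 c|G0 a0|G0|G0|G0|G0 a0 b0 f IHf u IHu|G0 a0 b0 t IH] r /=.
- rewrite /sig_env cls_rep; exact: DVar.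
- exact: DCst.
- apply: DEq => x y; rewrite -[x]cls_rep -[y]cls_rep /=.
  rewrite !appM_cls tvM_cls asbP cls_eq; by [].
- apply: DNeg => x; rewrite -[x]cls_rep /= appM_cls !tvM_cls.
  by rewrite (asb_iff (HTneg _)) asb_not.
- apply: DAnd => x y; rewrite -[x]cls_rep -[y]cls_rep /= !appM_cls !tvM_cls.
  by rewrite (asb_iff (T_and _ _)) asb_and.
- apply: DOr => x y; rewrite -[x]cls_rep -[y]cls_rep /= !appM_cls !tvM_cls.
  by rewrite (asb_iff (T_or _ _)) asb_or.
- rewrite -appM_cls; exact: DApp (IHf r) (IHu r).
- apply: DLam => x /=.
  have -> : appM (cls (TLam (subst t (up_sb (sig_env r))))) x = cls (subst t (sig_env ((x, r) : env M (a0 :: G0)))).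
    rewrite appM_cls_l; apply/cls_eq.
    have E : sig_env ((x, r) : env M (a0 :: G0)) = scons (rep x) (sig_env r).
      by apply: (fext2 (T := fun c => tm nil c)); apply: var_case.
    rewrite E -sb_up_scons; apply: HTvalid => I HI; exact: holds_beta.
  exact: IH.
Qed.

Lemma den_model_closed a (t : tm nil a) : den t (tt : env M nil) (cls t).
Proof. have := den_model t tt; by rewrite sb_closed. Qed.

Lemma M_interp : is_interp M.
Proof. move=> G a t r; eexists; exact: den_model. Qed.

Lemma M_holds p : holds M p <-> T p.
Proof. rewrite (holds_den (den_model_closed p)) /= tvM_cls; exact: asbP. Qed.

Lemma M_sep : separating M.
Proof.
move=> a b r s vr vs Hr Hs N.
rewrite (den_fun Hr (den_model_closed r)) (den_fun Hs (den_model_closed s)) in N.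
have [t Nt] : exists t, ~ eqT (TApp r t) (TApp s t).
  apply: HTwit => H; apply: N; exact/cls_eq.
exists t, (cls (TApp r t)), (cls (TApp s t)); split; first exact: den_model_closed.
split; first exact: den_model_closed.
by move/cls_eq.
Qed.

Lemma term_model p : T p -> has_separating_model p.
Proof. move=> Hp; exists M; split; first exact: M_interp; split; [exact: M_sep | exact/M_holds]. Qed.
End TermModel.

Lemma gaif_key_lemma (C : Type) (ctype : C -> ty) (mu : sentence ctype -> R) :
  probability mu -> gaifman mu -> (exists f : C -> nat, injective f) ->
  forall p, (0 < mu p)%R -> has_separating_model p.
Proof.
move=> Hmu Hg [f finj] p Hp.
have [es Hes] := @enum_ex _ (fun t : sentence ctype => tm_code f t)
  (fun x y => @tm_code_inj C ctype f finj nil To x y).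
have [tk Htk] := @enum_ex _ (@task_code C ctype f) (@task_code_inj C ctype f finj).
have [t_i _] := (Hg Ti Ti (TLam (TVar ctype (VZ nil Ti))) (TLam (TVar ctype (VZ nil Ti)))).2 1%R Rlt_0_1.
apply: (term_model (T := Th Hmu Hg es tk Hp)).
- by apply: Th_neg.
- by apply: Th_closed2.
- by apply: Th_valid.
- by apply: Th_wit.
- exact: t_i.
- by apply: Th_psi0.
Qed.

Section Main.
Variables (C : Type) (ctype : C -> ty).
Local Open Scope ring_scope.
Local Open Scope R_scope.


Lemma lin_transport (sat : sentence ctype -> Prop) n (phi : 'I_n -> sentence ctype) mu mu0 :
  lin_system sat phi mu -> (forall i, mu (phi i) = mu0 (phi i)) -> lin_system sat phi mu0.
Proof.
move=> [a [H1 [H2 H3]]] E; exists a; split => //; split => // i; by rewrite H2 E.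
Qed.

Theorem mainTheorem4' 
  (Hcountable : exists f : C -> nat, injective f)
  (n : nat) (phi : 'I_n -> sentence ctype) (mu0 : sentence ctype -> R)
  (Hmu0 : forall i : 'I_n, (0 <= mu0 (phi i) <= 1)%R) :
  ((exists mu : sentence ctype -> R,
       probability mu /\ (forall i : 'I_n, mu (phi i) = mu0 (phi i)))
     <-> lin_system (@has_model C ctype) phi mu0)
  /\
  ((exists mu : sentence ctype -> R,
       probability mu /\ gaifman mu /\ (forall i : 'I_n, mu (phi i) = mu0 (phi i)))
     <-> lin_system (@has_separating_model C ctype) phi mu0).
Proof.
split; split.
- move=> [mu [Hmu E]]; apply: (lin_transport _ E); apply: forward_sys => // S N.
  apply: mu_unsat => // I HI H; apply: N; by exists I.
- move=> [a [H1 [H2 [H3 H4]]]].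
  exists (muB phi (fun _ => True) a); split.
    apply: muB_prob => // S N; apply: H4 => -[I [HI H]]; apply: N; by exists I.
  move=> i; rewrite muB_phi; first exact: (H2 i).
  move=> S N; apply: H4 => -[I [HI H]]; apply: N; by exists I.
- move=> [mu [Hmu [Hg E]]]; apply: (lin_transport _ E); apply: forward_sys => // S N.
  case: (Rle_lt_or_eq_dec _ _ (mu_ge0 Hmu (psi phi S))) => // Hp.
  by case: N; apply: (gaif_key_lemma Hmu Hg Hcountable Hp).
- move=> [a [H1 [H2 [H3 H4]]]].
  exists (muB phi (@separating C ctype) a); split.
    apply: muB_prob => // S N; apply: H4 => -[I [HI H]]; apply: N; by exists I.
  split.
    apply: muB_gaifman => //.
  move=> i; rewrite muB_phi; first exact: (H2 i).
  move=> S N; apply: H4 => -[I [HI H]]; apply: N; by exists I.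
Qed.
End Main.

Theorem mainTheorem4 (C : Type) (ctype : C -> ty)
  (Hcountable : exists f : C -> nat, injective f)
  (n : nat) (phi : 'I_n -> sentence ctype) (mu0 : sentence ctype -> R)
  (Hmu0 : forall i : 'I_n, (0 <= mu0 (phi i) <= 1)%R) :
  ((exists mu : sentence ctype -> R,
       probability mu /\ (forall i : 'I_n, mu (phi i) = mu0 (phi i)))
     <-> lin_system (@has_model C ctype) phi mu0)
  /\
  ((exists mu : sentence ctype -> R,
       probability mu /\ gaifman mu /\ (forall i : 'I_n, mu (phi i) = mu0 (phi i)))
     <-> lin_system (@has_separating_model C ctype) phi mu0).
Proof. exact: (mainTheorem4' Hcountable Hmu0). Qed.
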